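(* Let $f,h:\mathbb{R}^d\to\mathbb{R}$ be Lipschitz with constants $L_f,L_h$, $a,b>0$, and $\widetilde Q=\{(x,s,t):h(x)\le as,\ f(x)+as\le bt\}$. Let $q\in\mathbb{R}^{d+2}$, $p_{k-1}\in\widetilde Q$, $r_{\mathrm{loc}}=\|p_{k-1}-q\|$, and let $p_*$ be a minimizer of $\|p-q\|$ over $\widetilde Q\cap\{p:\|p-q\|\le 2r_{\mathrm{loc}}\}$. Fix $c>1$ and set $\widetilde Q_{\mathrm{loc}}(c)=\widetilde Q\cap\{p:\|p-q\|\le cr_{\mathrm{loc}}\}$, $\widetilde C_h=\sqrt{L_h^2+a^2}$, $\widetilde C_f=\sqrt{L_f^2+a^2+b^2}$, $\mu=\min\{a/\widetilde C_h,\ b/\widetilde C_f\}$, $\lambda=2+a/b$, $\kappa=\frac{c-1}{\lambda+\mu}$, and $\bar p=p_*+(0,\Delta s,\frac ab\Delta s+\Delta t)$ with $\Delta s=\Delta t=\kappa r_{\mathrm{loc}}$ (here $0\in\mathbb{R}^d$). Then the closed ball of center $\bar p$ and radius $\kappa\mu r_{\mathrm{loc}}$ is contained in $\widetilde Q_{\mathrm{loc}}(c)$. In particular, $\mathrm{minwidth}(\widetilde Q_{\mathrm{loc}}(c))\ge2\kappa\mu r_{\mathrm{loc}}$ and $$\gamma(c):=\frac{cr_{\mathrm{loc}}}{\mathrm{minwidth}(\widetilde Q_{\mathrm{loc}}(c))}\le\frac{c(\lambda+\mu)}{(c-1)\mu}.$$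
   Context: $\mathrm{minwidth}(S)=\min_{\|w\|=1}(\max_{y\in S}w^\top y-\min_{y\in S}w^\top y)$. *)

(* Defs.v *)
From mathcomp Require Import all_boot all_order all_algebra.
From mathcomp Require Import all_classical all_reals.
Set Implicit Arguments. Unset Strict Implicit. Unset Printing Implicit Defensive.
Import Order.TTheory GRing.Theory Num.Theory.
Local Open Scope ring_scope.
Local Open Scope classical_set_scope.

(* A point of R^{d+2} is a triple (x, s, t) with x : R^d (= 'I_d -> R). *)
Definition pt (R : realType) (d : nat) : Type := (('I_d -> R) * R * R)%type.

Definition normd (R : realType) (d : nat) (x : 'I_d -> R) : R :=
  Num.sqrt (\sum_(i < d) x i ^+ 2).

Definition lipschitz (R : realType) (d : nat) (f : ('I_d -> R) -> R) (L : R) :=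
  0 <= L /\ forall x y : 'I_d -> R, `|f x - f y| <= L * normd (fun i => x i - y i).

Definition dotp (R : realType) (d : nat) (u v : pt R d) : R :=
  \sum_(i < d) u.1.1 i * v.1.1 i + u.1.2 * v.1.2 + u.2 * v.2.

Definition subp (R : realType) (d : nat) (u v : pt R d) : pt R d :=
  ((fun i => u.1.1 i - v.1.1 i), u.1.2 - v.1.2, u.2 - v.2).

Definition normp (R : realType) (d : nat) (u : pt R d) : R := Num.sqrt (dotp u u).

Definition distp (R : realType) (d : nat) (u v : pt R d) : R := normp (subp u v).

Definition Qt (R : realType) (d : nat) (f h : ('I_d -> R) -> R) (a b : R)
  : set (pt R d) :=
  [set p | h p.1.1 <= a * p.1.2 /\ f p.1.1 + a * p.1.2 <= b * p.2].

Definition cball (R : realType) (d : nat) (q : pt R d) (r : R) : set (pt R d) :=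
  [set p | distp p q <= r].

Definition width (R : realType) (d : nat) (S : set (pt R d)) (w : pt R d) : R :=
  sup [set dotp w y | y in S] - inf [set dotp w y | y in S].

Definition minwidth (R : realType) (d : nat) (S : set (pt R d)) : R :=
  inf [set width S w | w in [set w : pt R d | normp w = 1]].

(* Main.v *)
Require Import Defs.
From mathcomp Require Import all_boot all_order all_algebra.
From mathcomp Require Import all_classical all_reals.
From mathcomp Require Import lra ring.
Import Order.TTheory GRing.Theory Num.Theory.
Local Open Scope ring_scope.
Local Open Scope classical_set_scope.

Section Helpers.
Variables (R : realType) (d : nat).
Implicit Types (u v w : pt R d).

Definition linp u v (t : R) : pt R d :=
  ((fun i => u.1.1 i + t * v.1.1 i), u.1.2 + t * v.1.2, u.2 + t * v.2).

Lemma dotp_ge0 u : 0 <= dotp u u.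
Proof.
rewrite /dotp; apply: addr_ge0; [apply: addr_ge0|]; last 2 first.
- by rewrite -expr2 sqr_ge0.
- by rewrite -expr2 sqr_ge0.
by apply: sumr_ge0 => i _; rewrite -expr2 sqr_ge0.
Qed.

Lemma normp_ge0 u : 0 <= normp u.
Proof. exact: sqrtr_ge0. Qed.

Lemma dotp_ext u u' v : (forall i, u.1.1 i = u'.1.1 i) -> u.1.2 = u'.1.2 -> u.2 = u'.2 ->
  dotp u v = dotp u' v.
Proof.
move=> H1 H2 H3; rewrite /dotp H2 H3; congr (_ + _ + _).
by apply: eq_bigr => i _; rewrite H1.
Qed.

Lemma dotpC u v : dotp u v = dotp v u.
Proof.
rewrite /dotp; congr (_ + _ + _); last by rewrite mulrC.
  by apply: eq_bigr => i _; rewrite mulrC.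
by rewrite mulrC.
Qed.

Lemma dotp_linr w u v t : dotp w (linp u v t) = dotp w u + t * dotp w v.
Proof.
rewrite /dotp /linp /=.
rewrite (eq_bigr (fun i => w.1.1 i * u.1.1 i + t * (w.1.1 i * v.1.1 i))); last first.
  by move=> i _; ring.
rewrite big_split /= -mulr_sumr; ring.
Qed.

Lemma dotp_lin u v t :
  dotp (linp u v t) (linp u v t) = dotp u u + 2 * t * dotp u v + t ^+ 2 * dotp v v.
Proof.
rewrite dotp_linr dotpC dotp_linr dotpC (dotpC (linp u v t)) dotp_linr; ring.
Qed.

Lemma dotp_scale u w t : (forall i, u.1.1 i = t * w.1.1 i) -> u.1.2 = t * w.1.2 ->
  u.2 = t * w.2 -> dotp u u = t ^+ 2 * dotp w w.
Proof.
move=> H1 H2 H3; rewrite /dotp H2 H3.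
rewrite (eq_bigr (fun i => t ^+ 2 * (w.1.1 i * w.1.1 i))); last first.
  by move=> i _; rewrite H1; ring.
rewrite -mulr_sumr; ring.
Qed.

Lemma CS2 u v : dotp u v ^+ 2 <= dotp u u * dotp v v.
Proof.
have Qv0 := dotp_ge0 v.
set B := dotp u v; set Qu := dotp u u; set Qv := dotp v v.
have Hq : forall t, 0 <= Qu + 2 * t * B + t ^+ 2 * Qv.
  by move=> t; have := dotp_ge0 (linp u v t); rewrite dotp_lin.
have [Qvp|] := ltrP 0 Qv.
  rewrite -subr_ge0.
  have -> : Qu * Qv - B ^+ 2 = Qv * (Qu + 2 * (- B / Qv) * B + (- B / Qv) ^+ 2 * Qv).
    by field; rewrite gt_eqF.
  by apply: mulr_ge0; [exact: ltW|exact: Hq].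
move=> Qvle; have Qv00 : Qv = 0 by apply/eqP; rewrite eq_le Qvle Qv0.
have -> : B = 0.
  apply/eqP; apply/negP => /negP Bn0.
  have := Hq (- (Qu + 1) / (2 * B)); rewrite Qv00 mulr0 addr0.
  have -> : 2 * (- (Qu + 1) / (2 * B)) * B = - (Qu + 1) by field.
  lra.
by rewrite expr0n /= Qv00 mulr0.
Qed.

Lemma CSabs u v : `|dotp u v| <= normp u * normp v.
Proof.
rewrite /normp -sqrtrM; last exact: dotp_ge0.
by rewrite -sqrtr_sqr ler_wsqrtr // CS2.
Qed.

Lemma CS u v : dotp u v <= normp u * normp v.
Proof. exact: le_trans (ler_norm _) (CSabs u v). Qed.

Lemma CSN u v : - dotp u v <= normp u * normp v.
Proof. by apply: le_trans (CSabs u v); rewrite -normrN ler_norm. Qed.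

Lemma normp_add u v w : (forall i, w.1.1 i = u.1.1 i + v.1.1 i) ->
  w.1.2 = u.1.2 + v.1.2 -> w.2 = u.2 + v.2 -> normp w <= normp u + normp v.
Proof.
move=> H1 H2 H3.
have E : w = linp u v 1.
  case: w H1 H2 H3 => [[w1 w2] w3] /= H1 H2 H3; rewrite /linp !mul1r -H2 -H3.
  congr (_, _, _); apply: boolp.funext => i; by rewrite H1 mul1r.
have hu := normp_ge0 u; have hv := normp_ge0 v.
rewrite {1}/normp E dotp_lin -(ger0_norm (addr_ge0 hu hv)) -sqrtr_sqr ler_wsqrtr //.
have := CS u v; rewrite /normp.
have := sqr_sqrtr (dotp_ge0 u); have := sqr_sqrtr (dotp_ge0 v).
set su := Num.sqrt _; set sv := Num.sqrt _.
move=> Ev Eu; rewrite -{1}Eu -Ev. lra.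
Qed.

Lemma distp_tri u v w : distp u w <= distp u v + distp v w.
Proof. by apply: normp_add => [i||] /=; ring. Qed.

Lemma dotp_normd u : dotp u u = normd u.1.1 ^+ 2 + u.1.2 ^+ 2 + u.2 ^+ 2.
Proof.
rewrite /normd sqr_sqrtr; last by apply: sumr_ge0 => i _; exact: sqr_ge0.
by rewrite /dotp !expr2.
Qed.

End Helpers.

Lemma CS3 (R : realType) (al be ga x y z : R) :
  al * x + be * y + ga * z <=
  Num.sqrt (al ^+ 2 + be ^+ 2 + ga ^+ 2) * Num.sqrt (x ^+ 2 + y ^+ 2 + z ^+ 2).
Proof.
have [le0|gt0] := lerP (al * x + be * y + ga * z) 0.
  by apply: le_trans le0 _; apply: mulr_ge0; apply: sqrtr_ge0.
rewrite -sqrtrM; last by apply: addr_ge0; [apply: addr_ge0|]; apply: sqr_ge0.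
rewrite -(ger0_norm (ltW gt0)) -sqrtr_sqr ler_wsqrtr //.
rewrite -subr_ge0.
have -> : (al ^+ 2 + be ^+ 2 + ga ^+ 2) * (x ^+ 2 + y ^+ 2 + z ^+ 2) -
  (al * x + be * y + ga * z) ^+ 2 = (al * y - be * x) ^+ 2 + (al * z - ga * x) ^+ 2
   + (be * z - ga * y) ^+ 2 by ring.
by apply: addr_ge0; [apply: addr_ge0|]; apply: sqr_ge0.
Qed.

Theorem lemma27 (R : realType) (d : nat) (f h : ('I_d -> R) -> R)
  (Lf Lh a b : R) (q pk1 pst : pt R d) (c : R) :
  lipschitz f Lf -> lipschitz h Lh -> 0 < a -> 0 < b ->
  Qt f h a b pk1 ->
  let rloc := distp pk1 q in
  (Qt f h a b `&` cball q (2 * rloc)) pst ->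
  (forall p, (Qt f h a b `&` cball q (2 * rloc)) p -> distp pst q <= distp p q) ->
  1 < c ->
  let Qloc := Qt f h a b `&` cball q (c * rloc) in
  let Ch := Num.sqrt (Lh ^+ 2 + a ^+ 2) in
  let Cf := Num.sqrt (Lf ^+ 2 + a ^+ 2 + b ^+ 2) in
  let mu := Num.min (a / Ch) (b / Cf) in
  let lam := 2 + a / b in
  let kappa := (c - 1) / (lam + mu) in
  let ds := kappa * rloc in
  let dt := kappa * rloc in
  let pbar : pt R d := (pst.1.1, pst.1.2 + ds, pst.2 + a / b * ds + dt) in
  cball pbar (kappa * mu * rloc) `<=` Qloc /\
  2 * kappa * mu * rloc <= minwidth Qloc /\
  c * rloc / minwidth Qloc <= c * (lam + mu) / ((c - 1) * mu).
Proof.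
move=> [Lf0 Lipf] [Lh0 Liph] a0 b0 Qk rloc [Qst Bst] Hmin c1 Qloc Ch Cf mu lam
  kappa ds dt pbar.
have r0 : 0 <= rloc by exact: normp_ge0.
have Hst : distp pst q <= rloc.
  apply: Hmin; split => //; rewrite /cball /=.
  have : distp pk1 q = rloc by []. lra.
have Chp : 0 < Ch by rewrite sqrtr_gt0; nra.
have Cfp : 0 < Cf by rewrite sqrtr_gt0; nra.
have mup : 0 < mu by rewrite lt_min !divr_gt0.
have muh : mu <= a / Ch by rewrite ge_min lexx.
have muf : mu <= b / Cf by rewrite ge_min lexx orbT.
have abp : 0 < a / b by rewrite divr_gt0.
have lamp : 0 < lam by rewrite /lam; lra.
have kp : 0 < kappa by rewrite /kappa divr_gt0 // ?subr_gt0 //; lra.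
have kE : kappa * (lam + mu) = c - 1.
  by rewrite /kappa; field; rewrite lt0r_neq0 // addr_gt0.
set rho := kappa * mu * rloc.
have rhoE : rho = kappa * mu * rloc by [].
have rho0 : 0 <= rho by rewrite rhoE; apply: mulr_ge0 => //; apply: mulr_ge0; exact: ltW.
have ds0 : 0 <= ds by rewrite /ds; apply: mulr_ge0 => //; exact: ltW.
have C1 : cball pbar rho `<=` Qloc.
  move=> p Hp; rewrite /cball /= in Hp.
  set e := subp p pbar.
  set n := normd (fun i => p.1.1 i - pst.1.1 i).
  have ne : normp e = Num.sqrt (n ^+ 2 + (p.1.2 - (pst.1.2 + ds)) ^+ 2
                         + (p.2 - (pst.2 + a / b * ds + dt)) ^+ 2).
    by rewrite /normp dotp_normd.
  have Hn : normp e <= rho by [].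
  have L1 : h p.1.1 - h pst.1.1 <= Lh * n := le_trans (ler_norm _) (Liph _ _).
  have L2 : f p.1.1 - f pst.1.1 <= Lf * n := le_trans (ler_norm _) (Lipf _ _).
  have C := @CS3 R Lh (-a) 0 n (p.1.2 - (pst.1.2 + ds)) (p.2 - (pst.2 + a / b * ds + dt)).
  have E : Lh ^+ 2 + (- a) ^+ 2 + 0 ^+ 2 = Lh ^+ 2 + a ^+ 2 by ring.
  rewrite E -/Ch -ne in C.
  have C' := @CS3 R Lf a (-b) n (p.1.2 - (pst.1.2 + ds)) (p.2 - (pst.2 + a / b * ds + dt)).
  have E' : Lf ^+ 2 + a ^+ 2 + (- b) ^+ 2 = Lf ^+ 2 + a ^+ 2 + b ^+ 2 by ring.
  rewrite E' -/Cf -ne in C'.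
  have M1 : Ch * normp e <= Ch * rho by rewrite ler_wpM2l // ltW.
  have M2 : Cf * normp e <= Cf * rho by rewrite ler_wpM2l // ltW.
  have M3 : Ch * rho <= a * ds.
    have -> : a * ds = Ch * (kappa * (a / Ch) * rloc).
      by rewrite /ds; field; apply: lt0r_neq0.
    rewrite rhoE; apply: ler_wpM2l; [exact: ltW|]; apply: ler_wpM2r => //;
    apply: ler_wpM2l => //; exact: ltW.
  have M4 : Cf * rho <= b * dt.
    have -> : b * dt = Cf * (kappa * (b / Cf) * rloc).
      by rewrite /dt; field; apply: lt0r_neq0.
    rewrite rhoE; apply: ler_wpM2l; [exact: ltW|]; apply: ler_wpM2r => //;
    apply: ler_wpM2l => //; exact: ltW.
  have bE : b * (a / b * ds) = a * ds by field; apply: lt0r_neq0.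
  have dtE : dt = ds by [].
  case: Qst => Q1 Q2.
  split; first by split; lra.
  rewrite /cball /=.
  have T1 := @distp_tri R d p pst q; have T2 := @distp_tri R d p pbar pst.
  have P : distp pbar pst <= lam * ds.
    rewrite /distp /normp dotp_normd.
    have -> : normd (subp pbar pst).1.1 = 0.
      by rewrite /normd big1 ?sqrtr0 // => i _ /=; rewrite subrr expr2 mulr0.
    rewrite -(ger0_norm (mulr_ge0 (ltW lamp) ds0)) -sqrtr_sqr ler_wsqrtr //= /lam.
    rewrite -subr_ge0.
    have -> : ((2 + a / b) * ds) ^+ 2 -
      (0 ^+ 2 + (pst.1.2 + ds - pst.1.2) ^+ 2 + (pst.2 + a / b * ds + dt - pst.2) ^+ 2)
      = 2 * ds ^+ 2 + 2 * (a / b) * (ds * ds) by rewrite dtE; ring.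
    apply: addr_ge0; first by rewrite mulr_ge0 // sqr_ge0.
    by apply: mulr_ge0; [apply: mulr_ge0 => //; exact: ltW | exact: mulr_ge0].
  have F : rho + lam * ds = (c - 1) * rloc by rewrite rhoE /ds -kE; ring.
  lra.
split => //.
have C2 : 2 * kappa * mu * rloc <= minwidth Qloc.
  apply: lb_le_inf.
    exists (width Qloc ((fun _ => 0), 1, 0)); exists ((fun _ => 0), 1, 0) => //=.
    by rewrite /normp /dotp big1 /= ?mul0r // ?mulr1 ?mulr0 ?add0r ?addr0 sqrtr1.
  move=> z [w /= Hw <-].
  have Qw : dotp w w = 1.
    by have := sqr_sqrtr (@dotp_ge0 R d w); rewrite -/(normp w) Hw expr1n.
  set M := c * rloc + normp q.
  have nyM : forall y, Qloc y -> normp y <= M.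
    move=> y [_ Hy]; rewrite /cball /= in Hy.
    have H3 : normp y <= normp (subp y q) + normp q.
      by apply: (@normp_add R d) => [i||] /=; ring.
    have : normp (subp y q) <= c * rloc by [].
    rewrite /M; lra.
  have ub : has_ubound [set dotp w y | y in Qloc].
    exists M => z' [y Hy <-]; apply: le_trans (@CS R d w y) _; rewrite Hw mul1r; exact: nyM.
  have lb : has_lbound [set dotp w y | y in Qloc].
    exists (- M) => z' [y Hy <-]; rewrite lerNl.
    apply: le_trans (@CSN R d w y) _; rewrite Hw mul1r; exact: nyM.
  have inB : forall t, `|t| = rho -> Qloc (@linp R d pbar w t).
    move=> t Ht; apply: C1; rewrite /cball /= /distp /normp.
    rewrite (@dotp_scale R d _ w t) ?Qw ?mulr1 ?sqrtr_sqr ?Ht // => [i||] /=; ring.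
  have S1 := ub_le_sup ub (ex_intro2 _ _ _ (inB rho (ger0_norm rho0)) erefl).
  have S2 := ge_inf lb (ex_intro2 _ _ _ (inB (- rho) (etrans (normrN _) (ger0_norm rho0))) erefl).
  rewrite !(@dotp_linr R d) Qw in S1 S2.
  rewrite /width; lra.
split => //.
have K0 : 0 <= c * (lam + mu) / ((c - 1) * mu).
  apply: divr_ge0; apply: mulr_ge0; lra.
have [r00|rpos] := eqVneq rloc 0.
  by rewrite r00 mulr0 mul0r.
have rp : 0 < rloc by rewrite lt0r rpos.
have mwp : 0 < minwidth Qloc.
  apply: lt_le_trans C2; apply: mulr_gt0 => //; apply: mulr_gt0 => //; exact: mulr_gt0.
rewrite ler_pdivrMr //.
have := ler_wpM2l K0 C2.
have -> : c * (lam + mu) / ((c - 1) * mu) * (2 * kappa * mu * rloc) = 2 * c * rloc.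
  rewrite /kappa; field; rewrite !lt0r_neq0 //; lra.
have : 0 <= c * rloc by apply: mulr_ge0 => //; lra.
lra.
Qed.
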